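(* Every Hintikka formula $H$ of $\mathbf{L_1}$ satisfies $\dashv_H H$.
   Context: Formulas of $\mathbf{L_1}$: built from atomic formulas $\epsilon ab$ ($a,b$ name variables from a countably infinite list, possibly equal) with primitive connectives $\vee,\sim$; $\wedge,\supset,\equiv$ defined as usual. Disjunctions may be associated in any way. $\vdash_H A$: $A$ belongs to the smallest set containing all instances of classical propositional tautologies and all formulas $\epsilon ab\supset\epsilon aa$, $(\epsilon ab\wedge\epsilon bc)\supset\epsilon ac$, $(\epsilon ab\wedge\epsilon bb)\supset\epsilon ba$, closed under modus ponens. Positive/negative parts (occurrences): $A$ is a positive part of $A$; if $B\vee C$ is a positive part then $B,C$ are positive parts; if $\sim B$ is a positive part then $B$ is a negative part; if $\sim B$ is a negative part then $B$ is a positive part. $F[B_+,B_-]$ denotes a formula in which some formula $B$ has one occurrence as a positive part and another (non-overlapping) occurrence as a negative part. Hintikka formula: a formula $H$ such that (1) $H$ is not of the form $F[B_+,B_-]$; (2) if $B\vee C$ is a negative part of $H$ then $B$ or $C$ is; (3) if $\epsilon ab$ is a negative part then so is $\epsilon aa$; (4) if $\epsilon ab,\epsilon bc$ are negative parts then so is $\epsilon ac$; (5) if $\epsilon ab,\epsilon bb$ are negative parts then so is $\epsilon ba$. $\mathbf{HAR}$: fix a name variable $a_0$; $\dashv_H$ is the smallest set such that $\dashv_H\epsilon a_0a_0$; $\dashv_H\sim\epsilon a_0a_0$; if $\vdash_H A\supset B$ and $\dashv_H B$ then $\dashv_H A$; if $\dashv_H A$ and $A$ is obtained from $B$ by uniform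 substitution of name variables for name variables then $\dashv_H B$; if $A$ is a Hintikka formula that is a disjunction of atomic or negated atomic formulas, $\dashv_H A$, and $\epsilon ab$ is not a negative part of $A$, then $\dashv_H A\vee\epsilon ab$. *)

(* Defs.v *)
From Stdlib Require Import List Bool.
Import ListNotations.

Inductive form : Type :=
| Eps : nat -> nat -> form
| Or  : form -> form -> form
| Neg : form -> form.

Definition And (A B : form) : form := Neg (Or (Neg A) (Neg B)).
Definition Imp (A B : form) : form := Or (Neg A) B.
Definition Equiv (A B : form) : form := And (Imp A B) (Imp B A).

Fixpoint eval (v : nat -> nat -> bool) (A : form) : bool :=
  match A with
  | Eps a b => v a b
  | Or B C => eval v B || eval v C
  | Neg B => negb (eval v B)
  end.

(** Instances of classical propositional tautologies: formulas true under
    every truth assignment to their atomic subformulas. *)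
Definition taut (A : form) : Prop := forall v, eval v A = true.

Inductive Prov : form -> Prop :=
| Prov_taut : forall A, taut A -> Prov A
| Prov_ax1 : forall a b, Prov (Imp (Eps a b) (Eps a a))
| Prov_ax2 : forall a b c, Prov (Imp (And (Eps a b) (Eps b c)) (Eps a c))
| Prov_ax3 : forall a b, Prov (Imp (And (Eps a b) (Eps b b)) (Eps b a))
| Prov_mp : forall A B, Prov A -> Prov (Imp A B) -> Prov B.

(** Occurrences of subformulas, addressed by paths from the root. *)
Inductive step : Type := GoL | GoR | GoN.

(** [occ cur A p pol X]: starting at the root of [A] which has polarity [cur]
    (true = positive part, false = negative part), following path [p] reaches an
    occurrence of [X] which is a part of polarity [pol], according to:
    A is a positive part of A; if B \/ C is a positive part then B, C are
    positive parts; if ~B is a positive (negative) part then B is a negative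
    (positive) part. *)
Inductive occ : bool -> form -> list step -> bool -> form -> Prop :=
| occ_here : forall cur A, occ cur A [] cur A
| occ_orL : forall B C p pol X, occ true B p pol X -> occ true (Or B C) (GoL :: p) pol X
| occ_orR : forall B C p pol X, occ true C p pol X -> occ true (Or B C) (GoR :: p) pol X
| occ_neg : forall cur B p pol X, occ (negb cur) B p pol X -> occ cur (Neg B) (GoN :: p) pol X.

Definition pospart (H B : form) : Prop := exists p, occ true H p true B.
Definition negpart (H B : form) : Prop := exists p, occ true H p false B.

Definition is_prefix (p q : list step) : Prop := exists r, q = p ++ r.

(** [H] is of the form F[B_+, B_-]: some formula B has an occurrence as a
    positive part and another, non-overlapping occurrence as a negative part. *)
Definition has_pos_neg (H : form) : Prop :=
  exists B p q, occ true H p true B /\ occ true H q false B /\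
                ~ is_prefix p q /\ ~ is_prefix q p.

Definition Hintikka (H : form) : Prop :=
  ~ has_pos_neg H /\
  (forall B C, negpart H (Or B C) -> negpart H B \/ negpart H C) /\
  (forall a b, negpart H (Eps a b) -> negpart H (Eps a a)) /\
  (forall a b c, negpart H (Eps a b) -> negpart H (Eps b c) -> negpart H (Eps a c)) /\
  (forall a b, negpart H (Eps a b) -> negpart H (Eps b b) -> negpart H (Eps b a)).

Inductive lit_disj : form -> Prop :=
| ld_atom : forall a b, lit_disj (Eps a b)
| ld_natom : forall a b, lit_disj (Neg (Eps a b))
| ld_or : forall A B, lit_disj A -> lit_disj B -> lit_disj (Or A B).

Fixpoint subst (s : nat -> nat) (A : form) : form :=
  match A with
  | Eps a b => Eps (s a) (s b)
  | Or B C => Or (subst s B) (subst s C)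
  | Neg B => Neg (subst s B)
  end.

Inductive Ref (a0 : nat) : form -> Prop :=
| Ref_ax1 : Ref a0 (Eps a0 a0)
| Ref_ax2 : Ref a0 (Neg (Eps a0 a0))
| Ref_mp : forall A B, Prov (Imp A B) -> Ref a0 B -> Ref a0 A
| Ref_subst : forall A B (s : nat -> nat), Ref a0 A -> A = subst s B -> Ref a0 B
| Ref_ext : forall A a b, Hintikka A -> lit_disj A -> Ref a0 A ->
    ~ negpart A (Eps a b) -> Ref a0 (Or A (Eps a b)).

(* Main.v *)
Require Import Defs.
From Stdlib Require Import List Bool.
Import ListNotations.

Fixpoint atp (cur : bool) (A : form) : list (bool * (nat * nat)) :=
  match A with
  | Eps a b => [(cur, (a, b))]
  | Or B C => if cur then atp true B ++ atp true C else []
  | Neg B => atp (negb cur) B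
  end.

Definition E (x : nat * nat) : form := Eps (fst x) (snd x).
Definition negE (x : nat * nat) : form := Neg (E x).

Fixpoint F (ls : list form) (A : form) : form :=
  match ls with [] => A | l :: r => F r (Or A l) end.

Fixpoint sel (pol : bool) (l : list (bool * (nat * nat))) : list (nat * nat) :=
  match l with
  | [] => []
  | (p, x) :: r => if Bool.eqb p pol then x :: sel pol r else sel pol r
  end.

Lemma sel_In pol l x : In x (sel pol l) <-> In (pol, x) l.
Proof.
  induction l as [|[p y] r IH]; simpl. tauto.
  destruct p, pol; simpl; rewrite IH; split; intros Hh; intuition congruence.
Qed.

Lemma atp_F ls : forall A, atp true (F ls A) = atp true A ++ flat_map (atp true) ls.
Proof.
  induction ls as [|l r IH]; intros A; simpl. now rewrite app_nil_r.
  rewrite IH. simpl. now rewrite app_assoc.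
Qed.

Lemma eval_F v ls : forall A, eval v (F ls A) = eval v A || existsb (eval v) ls.
Proof.
  induction ls as [|l r IH]; intros A; simpl. now rewrite orb_false_r.
  rewrite IH. simpl. now rewrite orb_assoc.
Qed.

Lemma subst_F s ls : forall A, subst s (F ls A) = F (map (subst s) ls) (subst s A).
Proof.
  induction ls as [|l r IH]; intros A; simpl; [reflexivity|]. rewrite IH. reflexivity.
Qed.

Lemma ld_F ls : forall A, lit_disj A -> (forall l, In l ls -> lit_disj l) -> lit_disj (F ls A).
Proof.
  induction ls as [|l r IH]; intros A HA Hl; simpl; auto.
  apply IH. constructor; auto. apply Hl; simpl; auto. intros; apply Hl; simpl; auto.
Qed.

Lemma flat_E t l : In t (flat_map (atp true) (map E l)) <-> exists x, t = (true, x) /\ In x l.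
Proof.
  induction l as [|[a b] r IH]; simpl. split; [tauto| intros [x [_ []]]].
  rewrite IH. split.
  - intros [H|[x [H1 H2]]]; eauto.
  - intros [x [H1 [H2|H2]]]; subst; eauto.
Qed.

Lemma flat_negE t l : In t (flat_map (atp true) (map negE l)) <-> exists x, t = (false, x) /\ In x l.
Proof.
  induction l as [|[a b] r IH]; simpl. split; [tauto| intros [x [_ []]]].
  rewrite IH. split.
  - intros [H|[x [H1 H2]]]; eauto.
  - intros [x [H1 [H2|H2]]]; subst; eauto.
Qed.

Lemma atp_occ : forall A cur pol a b,
  In (pol, (a, b)) (atp cur A) <-> exists p, occ cur A p pol (Eps a b).
Proof.
  intros A cur pol a b; split.
  - revert cur. induction A; intros cur; simpl.
    + intros [Heq|[]]. inversion Heq; subst. exists []. constructor.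
    + destruct cur; [|intros []]. rewrite in_app_iff. intros [Hi|Hi].
      * destruct (IHA1 _ Hi) as [p Hp]. exists (GoL :: p). now constructor.
      * destruct (IHA2 _ Hi) as [p Hp]. exists (GoR :: p). now constructor.
    + intros Hi. destruct (IHA _ Hi) as [p Hp]. exists (GoN :: p). now constructor.
  - intros [p Hp]. remember (Eps a b) as X. induction Hp; subst; simpl.
    + left; reflexivity.
    + apply in_or_app; left; auto.
    + apply in_or_app; right; auto.
    + auto.
Qed.

Lemma occ_app : forall cur A p pol X, occ cur A p pol X ->
  forall q pol' Y, occ pol X q pol' Y -> occ cur A (p ++ q) pol' Y.
Proof.
  intros cur A p pol X H; induction H; intros q pol' Y HY; simpl; auto; constructor; auto.
Qed.

Lemma occ_app_inv : forall p cur A r pol X, occ cur A (p ++ r) pol X ->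
  exists pol' Y, occ cur A p pol' Y /\ occ pol' Y r pol X.
Proof.
  induction p as [|s p IHp]; intros cur A r pol X Hocc; simpl in *.
  - exists cur, A; split; [constructor|exact Hocc].
  - inversion Hocc; subst;
    match goal with Hh : occ _ _ (p ++ r) _ _ |- _ =>
      destruct (IHp _ _ _ _ _ Hh) as [pol' [Y [H1 H2]]] end;
    exists pol', Y; split; try exact H2; first [apply occ_orL; exact H1 | apply occ_orR; exact H1 | apply occ_neg; exact H1].
Qed.

Lemma occ_det : forall cur A p pol X, occ cur A p pol X ->
  forall pol' X', occ cur A p pol' X' -> pol = pol' /\ X = X'.
Proof.
  intros cur A p pol X H; induction H; intros pol' X' H0; inversion H0; subst; eauto.
Qed.

Lemma ld_neg_atom : forall A, lit_disj A -> forall p B, occ true A p false B ->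
  exists a b, B = Eps a b.
Proof.
  intros A HA; induction HA; intros p X Hp.
  - inversion Hp.
  - inversion Hp; subst. simpl in *.
    match goal with Hh : occ false (Eps _ _) _ _ _ |- _ => inversion Hh; subst end. eauto.
  - inversion Hp; subst; eauto.
Qed.

Lemma negpart_iff A a b : negpart A (Eps a b) <-> In (false, (a, b)) (atp true A).
Proof. unfold negpart; rewrite atp_occ; tauto. Qed.

Section Closure.
Variable Ns : list (nat * nat).
Hypothesis c3 : forall a b, In (a,b) Ns -> In (a,a) Ns.
Hypothesis c4 : forall a b c, In (a,b) Ns -> In (b,c) Ns -> In (a,c) Ns.
Hypothesis c5 : forall a b, In (a,b) Ns -> In (b,b) Ns -> In (b,a) Ns.

Lemma ld_hint A : lit_disj A ->
  (forall x, In (false, x) (atp true A) <-> In x Ns) ->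
  (forall x, In (true, x) (atp true A) -> ~ In x Ns) -> Hintikka A.
Proof.
  intros HA Hn Hp. unfold Hintikka. split; [|split; [|split; [|split]]].
  - intros [B [p [q [H1 [H2 _]]]]]. destruct (ld_neg_atom A HA q B H2) as [a [b ->]].
    apply (Hp (a,b)). apply atp_occ; eauto. apply Hn. apply atp_occ; eauto.
  - intros B C [p Hp']. destruct (ld_neg_atom A HA p _ Hp') as [a [b Hb]]; discriminate.
  - intros a b. rewrite !negpart_iff, !Hn. apply c3.
  - intros a b c. rewrite !negpart_iff, !Hn. apply c4.
  - intros a b. rewrite !negpart_iff, !Hn. apply c5.
Qed.

Lemma ext_ref a0 : forall ps A, lit_disj A -> Ref a0 A ->
  (forall x, In (false, x) (atp true A) <-> In x Ns) ->
  (forall x, In (true, x) (atp true A) -> ~ In x Ns) ->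
  (forall x, In x ps -> ~ In x Ns) ->
  Ref a0 (F (map E ps) A).
Proof.
  induction ps as [|[a b] ps IH]; intros A HA HR Hn Hp Hps; simpl; auto.
  apply IH.
  - constructor; auto. constructor.
  - apply Ref_ext; auto. apply ld_hint; auto.
    rewrite negpart_iff. intros Hi. apply (Hps (a,b)); simpl; auto. apply Hn; auto.
  - intros x. simpl. rewrite in_app_iff. simpl. split.
    + intros [H|[H|[]]]; [apply Hn; auto| discriminate].
    + intros H; left; apply Hn; auto.
  - intros x. simpl. rewrite in_app_iff. simpl. intros [H|[H|[]]].
    + apply Hp; auto.
    + inversion H; subst. apply Hps; simpl; auto.
  - intros x Hx; apply Hps; simpl; auto.
Qed.
End Closure.

Lemma sem_atp v : forall A cur, eval v A = negb cur ->
  forall pol a b, In (pol, (a, b)) (atp cur A) -> v a b = negb pol.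
Proof.
  induction A; intros cur He pol a b Hin; simpl in *.
  - destruct Hin as [Heq|[]]; inversion Heq; subst; exact He.
  - destruct cur; [|contradiction]. simpl in He. apply orb_false_elim in He.
    destruct He as [He1 He2]. apply in_app_iff in Hin. destruct Hin as [Hi|Hi].
    + apply (IHA1 true); auto.
    + apply (IHA2 true); auto.
  - apply (IHA (negb cur)); [destruct (eval v A), cur; simpl in *; congruence | exact Hin].
Qed.

Lemma sem_H v H :
  (forall B C, negpart H (Or B C) -> negpart H B \/ negpart H C) ->
  (forall pol a b, In (pol, (a, b)) (atp true H) -> v a b = negb pol) ->
  forall X p pol, occ true H p pol X -> eval v X = negb pol.
Proof.
  intros H2 Hat X. induction X; intros p pol Hocc.
  - simpl. apply Hat. apply atp_occ. eauto.
  - destruct pol.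
    + simpl. rewrite (IHX1 (p ++ [GoL]) true), (IHX2 (p ++ [GoR]) true); auto.
      * eapply occ_app; [exact Hocc| constructor; constructor].
      * eapply occ_app; [exact Hocc| constructor; constructor].
    + destruct (H2 X1 X2 (ex_intro _ p Hocc)) as [[q Hq]|[q Hq]]; simpl.
      * rewrite (IHX1 q false Hq). reflexivity.
      * rewrite (IHX2 q false Hq). apply orb_true_r.
  - simpl. rewrite (IHX (p ++ [GoN]) (negb pol)).
    + destruct pol; reflexivity.
    + eapply occ_app; [exact Hocc| apply occ_neg; constructor].
Qed.

Lemma has_atom H :
  (forall B C, negpart H (Or B C) -> negpart H B \/ negpart H C) ->
  forall X p pol, occ true H p pol X -> exists q pol' a b, occ true H q pol' (Eps a b).
Proof.
  intros H2 X. induction X; intros p pol Hocc.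
  - eauto.
  - destruct pol.
    + apply (IHX1 (p ++ [GoL]) true). eapply occ_app; [exact Hocc| constructor; constructor].
    + destruct (H2 X1 X2 (ex_intro _ p Hocc)) as [[q Hq]|[q Hq]]; eauto.
  - apply (IHX (p ++ [GoN]) (negb pol)). eapply occ_app; [exact Hocc| apply occ_neg; constructor].
Qed.

Lemma ex_neg a0 v l : existsb (eval v) (map (subst (fun _ => a0)) (map negE l)) = true ->
  v a0 a0 = false.
Proof.
  induction l as [|x r IH]; simpl. discriminate.
  intros Hh. apply orb_true_iff in Hh. destruct Hh as [Hh|Hh]; auto.
  destruct (v a0 a0); auto.
Qed.

Theorem theorem3p1 : forall (a0 : nat) (H : form), Hintikka H -> Ref a0 H.
Proof.
  intros a0 H HH.
  pose proof HH as [H1 [H2 [H3 [H4 H5]]]].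
  remember (sel false (atp true H)) as Ns eqn:HNs.
  remember (sel true (atp true H)) as Ps eqn:HPs.
  assert (HN : forall a b, negpart H (Eps a b) <-> In (a,b) Ns).
  { intros a b. rewrite negpart_iff, HNs, sel_In. tauto. }
  assert (c3 : forall a b, In (a,b) Ns -> In (a,a) Ns).
  { intros a b. rewrite <- !HN. apply H3. }
  assert (c4 : forall a b c, In (a,b) Ns -> In (b,c) Ns -> In (a,c) Ns).
  { intros a b c. rewrite <- !HN. apply H4. }
  assert (c5 : forall a b, In (a,b) Ns -> In (b,b) Ns -> In (b,a) Ns).
  { intros a b. rewrite <- !HN. apply H5. }
  assert (Hdisj : forall x, In x Ps -> ~ In x Ns).
  { intros [a b] Hp Hn. rewrite <- HN in Hn. destruct Hn as [q Hq].
    rewrite HPs, sel_In, atp_occ in Hp. destruct Hp as [p Hp].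
    apply H1. exists (Eps a b), p, q. split; [exact Hp|split; [exact Hq|split]].
    - intros [r ->]. destruct (occ_app_inv _ _ _ _ _ _ Hq) as [pol' [Y [Ha Hb]]].
      destruct (occ_det _ _ _ _ _ Hp _ _ Ha) as [<- <-]. inversion Hb.
    - intros [r ->]. destruct (occ_app_inv _ _ _ _ _ _ Hp) as [pol' [Y [Ha Hb]]].
      destruct (occ_det _ _ _ _ _ Hq _ _ Ha) as [<- <-]. inversion Hb. }
  assert (HL : exists L, Ref a0 L /\
            forall pol a b, In (pol,(a,b)) (atp true H) -> In (pol,(a,b)) (atp true L)).
  { destruct Ns as [|n0 ns].
    - destruct Ps as [|p0 ps].
      + exfalso. destruct (has_atom H H2 H [] true (occ_here _ _)) as [q [pol [a [b Hq]]]].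
        assert (Hi : In (pol,(a,b)) (atp true H)) by (apply atp_occ; eauto).
        destruct pol.
        * assert (Hx : In (a,b) (sel true (atp true H))) by (apply sel_In; auto).
          rewrite <- HPs in Hx. destruct Hx.
        * assert (Hx : In (a,b) (sel false (atp true H))) by (apply sel_In; auto).
          rewrite <- HNs in Hx. destruct Hx.
      + exists (F (map E ps) (E p0)). split.
        * apply (ext_ref [] c3 c4 c5).
          -- constructor.
          -- apply (Ref_subst a0 (Eps a0 a0) _ (fun _ => a0)); [constructor| reflexivity].
          -- intros x; destruct p0; simpl; split; [intros [Hh|[]]; discriminate| intros []].
          -- intros x _ [].
          -- intros x _ [].
        * intros pol a b Hi. rewrite atp_F, in_app_iff. destruct pol.
          -- assert (Hx : In (a,b) (p0 :: ps)) by (rewrite HPs; apply sel_In; auto).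
             destruct Hx as [Hx|Hx].
             ++ left; subst; simpl; auto.
             ++ right; apply flat_E; eauto.
          -- assert (Hx : In (a,b) (@nil (nat*nat))) by (rewrite HNs; apply sel_In; auto).
             destruct Hx.
    - exists (F (map E Ps) (F (map negE ns) (negE n0))). split.
      + apply (ext_ref (n0 :: ns) c3 c4 c5).
        * apply ld_F; [destruct n0; constructor|].
          intros l Hl. apply in_map_iff in Hl. destruct Hl as [[x y] [<- _]]. constructor.
        * apply (Ref_subst a0 (subst (fun _ => a0) (F (map negE ns) (negE n0))) _ (fun _ => a0)); [|reflexivity].
          rewrite subst_F. apply Ref_mp with (B := Neg (Eps a0 a0)); [|apply Ref_ax2].
          apply Prov_taut. intros v. simpl. rewrite eval_F. simpl.
          destruct (v a0 a0) eqn:Ev; simpl; auto.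
          destruct (existsb _ _) eqn:Ex; auto.
          apply ex_neg in Ex. congruence.
        * intros x. rewrite atp_F, in_app_iff, flat_negE. destruct n0; simpl. split.
          -- intros [[Hh|[]]|[y [Hy1 Hy2]]]; [left; congruence| right; congruence].
          -- intros [Hh|Hh]; [left; left; congruence| right; eauto].
        * intros x. rewrite atp_F, in_app_iff, flat_negE. destruct n0; simpl.
          intros [[Hh|[]]|[y [Hy1 Hy2]]]; discriminate.
        * exact Hdisj.
      + intros pol a b Hi. rewrite !atp_F, !in_app_iff. destruct pol.
        * right. apply flat_E. exists (a,b). split; auto. rewrite HPs; apply sel_In; auto.
        * assert (Hx : In (a,b) (n0 :: ns)) by (rewrite HNs; apply sel_In; auto).
          left. destruct Hx as [Hx|Hx].
          -- left; subst; simpl; auto.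
          -- right; apply flat_negE; eauto. }
  destruct HL as [L [HR Hsub]].
  apply Ref_mp with (B := L); auto.
  apply Prov_taut. intros v. simpl.
  destruct (eval v L) eqn:EL; [apply orb_true_r|]. rewrite orb_false_r.
  rewrite (sem_H v H H2) with (p := []) (pol := true); auto; [|constructor].
  intros pol a b Hi. apply (sem_atp v L true EL). auto.
Qed.
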